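(* Let $d,N,m$ be positive integers with $m\ge d$. Let $X\in\mathbb{R}^{d\times m}$ satisfy $XX^T=I_d$. Consider the two-layer linear network $f(x)=W_2W_1x$ with $W_1\in\mathbb{R}^{N\times d}$, $W_2\in\mathbb{R}^{1\times N}$, and targets $Y=\beta^TX$ for some $\beta\in\mathbb{R}^d\setminus\{0\}$, $\hat\beta=\beta/\|\beta\|$. Let $0<\sigma\ll1$, let $\|W_2^{(0)}\|_F=\sigma$, and take the rank-one initialization $W_1^{(0)}\in\mathbb{R}^{N\times d}$ whose first row is $\sigma\hat\beta^T$ and whose other rows are zero. With initial NTK $K^{(0)}=X^T\big(W_1^{(0)T}W_1^{(0)}+\|W_2^{(0)}\|^2I_d\big)X$ and final NTK $K^{(f)}=\|\beta\|\,X^T(\hat\beta\hat\beta^T+I_d)X+O(\sigma^2)$, one has $\mathrm{KA}(K^{(f)},K^{(0)})=1+O(\sigma^2)$.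
   Context: $\mathrm{KA}(K^{(f)},K^{(0)})=\dfrac{\operatorname{Tr}(K^{(f)}K^{(0)})}{\|K^{(f)}\|_F\,\|K^{(0)}\|_F}$. The expression for $K^{(f)}$ is the asymptotic neural tangent kernel after training this network by gradient flow on the mean squared error from small initialization, taken as given. *)

(* Defs.v *)
From mathcomp Require Import all_boot all_order all_algebra.
Set Implicit Arguments. Unset Strict Implicit. Unset Printing Implicit Defensive.
Import Order.TTheory GRing.Theory Num.Theory.
Local Open Scope ring_scope.

Definition frob (R : rcfType) (p q : nat) (A : 'M[R]_(p, q)) : R :=
  Num.sqrt (\sum_(i < p) \sum_(j < q) A i j ^+ 2).

Definition vnorm (R : rcfType) (d : nat) (v : 'cV[R]_d) : R := frob v.

Definition KA (R : rcfType) (m : nat) (K K' : 'M[R]_m) : R :=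
  \tr (K *m K') / (frob K * frob K').

Definition W1init (R : rcfType) (N d : nat) (sigma : R) (bhat : 'cV[R]_d)
  : 'M[R]_(N, d) :=
  \matrix_(i < N, j < d) (if val i == 0%N then sigma * bhat j 0 else 0).

Definition NTK0 (R : rcfType) (d m N : nat) (X : 'M[R]_(d, m))
  (W1 : 'M[R]_(N, d)) (W2 : 'rV[R]_N) : 'M[R]_m :=
  X^T *m (W1^T *m W1 + (frob W2 ^+ 2)%:M) *m X.

(* Main.v *)
Require Import Defs.
From mathcomp Require Import all_boot all_order all_algebra ring lra.
Import Order.TTheory GRing.Theory Num.Theory.
Set Implicit Arguments. Unset Strict Implicit.
Local Open Scope ring_scope.
Definition ip {R : rcfType} (p q : nat) (A B : 'M[R]_(p, q)) : R := \sum_i \sum_j A i j * B i j.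
Lemma ipC {R : rcfType} p q (A B : 'M[R]_(p,q)) : ip A B = ip B A.
Proof. by apply: eq_bigr => i _; apply: eq_bigr => j _; rewrite mulrC. Qed.
Lemma ipDl {R : rcfType} p q (A B C : 'M[R]_(p,q)) : ip (A + B) C = ip A C + ip B C.
Proof. rewrite /ip -big_split; apply: eq_bigr => i _; rewrite -big_split; apply: eq_bigr => j _; by rewrite mxE mulrDl. Qed.
Lemma ipZl {R : rcfType} p q k (A B : 'M[R]_(p,q)) : ip (k *: A) B = k * ip A B.
Proof. rewrite /ip mulr_sumr; apply: eq_bigr => i _; rewrite mulr_sumr; apply: eq_bigr => j _; by rewrite mxE mulrA. Qed.
Lemma ipDr {R : rcfType} p q (A B C : 'M[R]_(p,q)) : ip C (A + B) = ip C A + ip C B.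
Proof. by rewrite ipC ipDl !(ipC C). Qed.
Lemma ipZr {R : rcfType} p q k (A B : 'M[R]_(p,q)) : ip B (k *: A) = k * ip B A.
Proof. by rewrite ipC ipZl ipC. Qed.
Lemma ip_ge0 {R : rcfType} p q (A : 'M[R]_(p,q)) : 0 <= ip A A.
Proof. by apply: sumr_ge0 => i _; apply: sumr_ge0 => j _; rewrite -expr2 sqr_ge0. Qed.
Lemma ip_eq0 {R : rcfType} p q (A : 'M[R]_(p,q)) : ip A A = 0 -> A = 0.
Proof.
move=> /eqP; rewrite psumr_eq0 => [/allP H|i _]; last first.
  by apply: sumr_ge0 => j _; rewrite -expr2 sqr_ge0.
apply/matrixP => i j; rewrite mxE.
have := H i (mem_index_enum _); rewrite /= psumr_eq0 => [/allP H2|k _]; last by rewrite -expr2 sqr_ge0.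
by have /eqP := H2 j (mem_index_enum _); rewrite -expr2 => /eqP; rewrite sqrf_eq0 => /eqP.
Qed.
Lemma frobE {R : rcfType} p q (A : 'M[R]_(p,q)) : frob A = Num.sqrt (ip A A).
Proof. by rewrite /frob /ip; congr Num.sqrt; apply: eq_bigr => i _; apply: eq_bigr => j _; rewrite expr2. Qed.
Lemma frob_gt0 {R : rcfType} p q (A : 'M[R]_(p,q)) : A != 0 -> 0 < frob A.
Proof.
move=> hA; rewrite frobE sqrtr_gt0 lt_def ip_ge0 andbT.
by apply/eqP => /ip_eq0 /eqP; rewrite (negbTE hA).
Qed.
Lemma CS {R : rcfType} p q (A B : 'M[R]_(p,q)) : 0 < ip A A -> ip A B ^+ 2 <= ip A A * ip B B.
Proof.
move=> a0.
have := ip_ge0 (ip A A *: B + (- ip A B) *: A).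
rewrite !ipDl !ipDr !ipZl !ipZr (ipC B A).
set a := ip A A; set b := ip A B; set c := ip B B => h.
have h2 : 0 <= a * (a * c - b ^+ 2) by move: h; congr (_ <= _); ring.
rewrite -subr_ge0; by rewrite pmulr_rge0 in h2.
Qed.
Lemma tr_ip {R : rcfType} m l (A : 'M[R]_(m, l)) (B : 'M[R]_(l, m)) : \tr (A *m B) = ip A B^T.
Proof. by rewrite /mxtrace /ip; apply: eq_bigr => i _; rewrite mxE; apply: eq_bigr => j _; rewrite mxE. Qed.
Lemma core {R : rcfType} (n s r k a b e C sg : R) : 0 < n -> 0 < s -> a = s^+2 -> 0 <= r -> e = r^+2 ->
  0 <= k -> k^+2 = n^+2*a + 2*n*b + e -> b^+2 <= a*e -> r <= C*sg^+2 -> C*sg^+2 <= n*s/2 ->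
  `|(n*a+b)/(k*s) - 1| <= 4*C/(n*s) * sg^+2.
Proof.
move=> n0 s0 -> r0 -> k0 hk hb hr hT.
set T := C * sg^+2 in hr hT *.
have sr0 : 0 <= s*r by rewrite mulr_ge0 // ltW.
have hbn : `|b| <= s*r.
  by rewrite -ler_sqr ?nnegrE ?normr_ge0 // real_normK ?num_real // exprMn.
move: hbn; rewrite ler_norml => /andP[hb2 hb1].
have hrs : r <= n*s/2 by lra.
have k1 : n*s - r <= k by nra.
have k2 : k <= n*s + r by nra.
have kp : 0 < k by nra.
have ksp : 0 < k*s by nra.
have -> : (n * s ^+ 2 + b) / (k * s) - 1 = (n * s ^+ 2 + b - k*s) / (k*s).
  by field; rewrite ?gt_eqF.
rewrite normrM normfV (gtr0_norm ksp) ler_pdivrMr //.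
have -> : 4 * C / (n * s) * sg ^+ 2 * (k * s) = 4 * T * k / n.
  by rewrite /T; field; rewrite !gt_eqF.
rewrite ler_pdivlMr //.
have h1 : `|n * s ^+ 2 + b - k * s| <= 2*r*s.
  rewrite ler_norml; apply/andP; split; nra.
nra.
Qed.
Lemma W1sq {R : rcfType} N d (hN : (0 < N)%N) sg (bh : 'cV[R]_d) :
  (W1init N sg bh)^T *m W1init N sg bh = sg ^+ 2 *: (bh *m bh^T).
Proof.
case: N hN => // N' _.
apply/matrixP => i j; rewrite !mxE big_ord_recl big1 => [|k _]; last first. by rewrite !mxE /= mul0r.
rewrite big_ord_recl big_ord0 !mxE /= !addr0 ?mxE. have -> : (0 : 'I_1) = ord0 by apply: val_inj.
ring.
Qed.
Lemma K0E {R : rcfType} d m N (hN : (0 < N)%N) (X : 'M[R]_(d, m)) sg (bh : 'cV[R]_d) (W2 : 'rV[R]_N) :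
  0 < sg -> frob W2 = sg ->
  NTK0 X (W1init N sg bh) W2 = sg ^+ 2 *: (X^T *m (bh *m bh^T + 1%:M) *m X).
Proof.
move=> sg0 hW; rewrite /NTK0 W1sq // hW -scalemx1 -scalerDr.
by rewrite -scalemxAr -scalemxAl.
Qed.
Unset Implicit Arguments.

Theorem proposition1 (R : rcfType) (d N m : nat)
  (hd : (0 < d)%N) (hN : (0 < N)%N) (hm : (0 < m)%N) (hmd : (d <= m)%N)
  (X : 'M[R]_(d, m)) (hX : X *m X^T = 1%:M)
  (beta : 'cV[R]_d) (hbeta : beta != 0)
  (W2 : R -> 'rV[R]_N) (hW2 : forall sigma, 0 < sigma -> frob (W2 sigma) = sigma)
  (Kf : R -> 'M[R]_m)
  (hKf : exists C : R, exists delta : R, 0 < delta /\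
     forall sigma, 0 < sigma -> sigma < delta ->
       frob (Kf sigma - vnorm beta *:
               (X^T *m ((vnorm beta)^-1 *: beta *m ((vnorm beta)^-1 *: beta)^T
                        + 1%:M) *m X))
       <= C * sigma ^+ 2) :
  exists C : R, exists delta : R, 0 < delta /\
    forall sigma, 0 < sigma -> sigma < delta ->
      `| KA (Kf sigma)
            (NTK0 X (W1init N sigma ((vnorm beta)^-1 *: beta)) (W2 sigma)) - 1|
      <= C * sigma ^+ 2.
Proof.
case: hKf => C [dl [dl0 hC]].
set n := vnorm beta in hC *.
set bh := n^-1 *: beta in hC *.
set M := X^T *m (bh *m bh^T + 1%:M) *m X in hC *.
have n0 : 0 < n by rewrite /n /vnorm frob_gt0.
have MT : M^T = M.
  by rewrite /M !trmx_mul trmxK mulmxA raddfD /= trmx_mul trmxK trmx1.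
have trM : \tr M = ip bh bh + d%:R.
  rewrite /M mxtrace_mulC mulmxA hX mul1mx mxtraceD mxtrace1 tr_ip.
  by rewrite trmxK.
have a0 : 0 < ip M M.
  rewrite lt_def ip_ge0 andbT; apply/eqP => /ip_eq0 M0.
  move: trM; rewrite M0 mxtrace0 => /eqP; apply/negP; rewrite eq_sym.
  rewrite gt_eqF // ltr_wpDl ?ip_ge0 // ltr0n //.
set a := ip M M in a0.
set s := Num.sqrt a.
have s0 : 0 < s by rewrite sqrtr_gt0.
have as2 : a = s ^+ 2 by rewrite sqr_sqrtr // ltW.
set T := n * s / 2.
have T0 : 0 < T by rewrite divr_gt0 // mulr_gt0.
exists (4 * C / (n * s)), (Num.min dl (Num.min 1 (T / (`|C| + 1)))).
split.
  rewrite !lt_min dl0 ltr01 /= divr_gt0 //.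
  by rewrite ltr_wpDl.
move=> sg sg0; rewrite !lt_min => /and3P [sgd sg1 sgT].
have hr := hC sg sg0 sgd.
set E := Kf sg - n *: M in hr.
have KfE : Kf sg = n *: M + E by rewrite /E addrC subrK.
clearbody E.
rewrite (@K0E R d m N hN X sg bh (W2 sg) sg0 (hW2 sg sg0)) -/bh -/M /KA.
rewrite -scalemxAr mxtraceZ tr_ip MT.
have fM : frob (sg ^+ 2 *: M) = sg ^+ 2 * s.
  rewrite frobE ipZl ipZr mulrA sqrtrM; last by rewrite mulr_ge0 // exprn_ge0 // ltW.
  by rewrite -expr2 sqrtr_sqr ger0_norm // exprn_ge0 // ltW.
rewrite fM.
set k := frob (Kf sg).
have -> : sg ^+ 2 * ip (Kf sg) M / (k * (sg ^+ 2 * s)) = ip (Kf sg) M / (k * s).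
  have sg2 : sg ^+ 2 != 0 by rewrite gt_eqF // exprn_gt0.
  rewrite (mulrCA k) invfM mulrACA divff // mul1r //.
have hip : ip (Kf sg) M = n * a + ip M E by rewrite KfE ipDl ipZl (ipC E).
rewrite hip.
apply: (core (e := ip E E) (r := frob E) (k := k)) => //.
- by rewrite frobE sqrtr_ge0.
- by rewrite frobE sqr_sqrtr // ip_ge0.
- by rewrite /k frobE sqrtr_ge0.
- by rewrite /k frobE sqr_sqrtr ?ip_ge0 // KfE !ipDl !ipDr !ipZl !ipZr (ipC E M) -/a; ring.
- exact: CS.
- have Cle : C * sg ^+ 2 <= `|C| * sg ^+ 2 by apply: ler_wpM2r; [rewrite exprn_ge0 // ltW | exact: ler_norm].
  have h2 : sg ^+ 2 <= sg by rewrite expr2 ger_pMr // ltW.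
  have h3 : `|C| * sg ^+ 2 <= (`|C| + 1) * sg.
    apply: le_trans (_ : `|C| * sg <= _); first by rewrite ler_wpM2l.
    by apply: ler_wpM2r; [exact: ltW | rewrite lerDl].
  have h4 : (`|C| + 1) * sg <= T.
    by rewrite mulrC -ler_pdivlMr ?ltW // ltr_wpDl.
  rewrite -/T; apply: le_trans Cle _; apply: le_trans h3 _; exact: h4.
Qed.
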